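(* Let $n\ge1$ and $s\ge1$ be integers, $\delta>0$, and $p_t\in[0,1)$. Let $\ell=\frac{6(2+\delta)^2}{\delta^2}\cdot\frac{\log(\sqrt{2}\,n)}{1-p_t}$ and suppose $\ell\le s$. Let $A\in\{0,1\}^{s\times n}$ be a random matrix whose entries are independent with $\Pr[A_{i,j}=1]=p_a=\ell/s$, and, independently of $A$, let $\mathcal{R}\subseteq[s]$ be a random set containing each $i\in[s]$ independently with probability $1-p_t$. Then with probability at least $1-\frac1n$ there exists a vector $\mathbf{b}\in\mathbb{R}^{|\mathcal{R}|}$ with non-negative entries such that $\mathbf{b}^TA_{\mathcal{R}}=(a_1,\ldots,a_n)$ with $1\le a_j\le1+\delta$ for all $j\in[n]$, where $A_{\mathcal{R}}$ is the submatrix of $A$ consisting of the rows indexed by $\mathcal{R}$.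
   Context: Random straggler model: each of the $s$ compute nodes independently fails to respond (is a straggler) with probability $p_t$; $\mathcal{R}$ is the set of non-stragglers. The conclusion is that the random assignment matrix $A$ satisfies the straggler-resilience property (existence of a non-negative recovery vector $\mathbf{b}$ with $\mathbf{b}^TA_{\mathcal{R}}$ having all entries in $[1,1+\delta]$) for the realized set $\mathcal{R}$ of non-stragglers. $\log$ denotes the natural logarithm. *)

(* Defs.v *)
From HB Require Import structures.
From mathcomp Require Import all_boot all_order all_algebra.
From mathcomp Require Import all_classical all_reals all_analysis.
Set Implicit Arguments. Unset Strict Implicit. Unset Printing Implicit Defensive.
Import Order.TTheory GRing.Theory Num.Theory.
Local Open Scope ring_scope.

Definition ell_param (R : realType) (n : nat) (delta pt : R) : R :=
  (6 * (2 + delta) ^+ 2 / delta ^+ 2) * (ln (Num.sqrt 2 * n%:R) / (1 - pt)).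

Definition matrix_weight (R : realType) (s n : nat) (pa : R)
  (A : 'M[bool]_(s, n)) : R :=
  \prod_(i < s) \prod_(j < n) (if A i j then pa else 1 - pa).

Definition set_weight (R : realType) (s : nat) (pt : R) (Rs : {set 'I_s}) : R :=
  \prod_(i < s) (if i \in Rs then 1 - pt else pt).

(* A_R: the submatrix of A (as a real matrix) with rows indexed by Rs,
   listed in increasing order. *)
Definition sub_rows (R : realType) (s n : nat) (A : 'M[bool]_(s, n))
  (Rs : {set 'I_s}) : 'M[R]_(#|Rs|, n) :=
  \matrix_(k < #|Rs|, j < n) ((A (@enum_val _ (mem Rs) k) j)%:R : R).

Definition resilient (R : realType) (s n : nat) (delta : R)
  (A : 'M[bool]_(s, n)) (Rs : {set 'I_s}) : Prop :=
  exists b : 'rV[R]_#|Rs|,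
    (forall k, 0 <= b 0 k) /\
    (forall j, 1 <= (b *m sub_rows R A Rs) 0 j <= 1 + delta).

(* Probability (under the joint product law of A and Rs) of the event. *)
Definition prob_resilient (R : realType) (s n : nat) (pa pt delta : R) : R :=
  \sum_(A : 'M[bool]_(s, n)) \sum_(Rs : {set 'I_s})
     (if `[< resilient delta A Rs >] then matrix_weight pa A * set_weight pt Rs
      else 0).

(* Main.v *)
Require Import Defs.
From HB Require Import structures.
From mathcomp Require Import all_boot all_order all_algebra.
From mathcomp Require Import all_classical all_reals all_analysis.
Import Order.TTheory GRing.Theory Num.Theory.
Local Open Scope ring_scope.
From mathcomp Require Import lra ring.
Import numFieldNormedType.Exports.

Section Comb.
Variable R : realType.

Lemma sum_mx_prod (s n : nat) (F : 'I_s -> 'I_n -> bool -> R) :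
  \sum_(A : 'M[bool]_(s, n)) \prod_i \prod_j F i j (A i j) =
  \prod_i \prod_j \sum_b F i j b.
Proof.
rewrite pair_big /= bigA_distr_bigA /=.
rewrite (reindex (@Matrix bool s n)) /=; last first.
  by exists (@mx_val bool s n) => [[f]|[f]].
apply: eq_bigr => f _; rewrite pair_big /=.
by apply: eq_bigr => -[i j] _.
Qed.

Lemma sum_set_prod (s : nat) (F : 'I_s -> bool -> R) :
  \sum_(S : {set 'I_s}) \prod_i F i (i \in S) =
  \prod_i \sum_b F i b.
Proof.
rewrite bigA_distr_bigA /=.
rewrite (reindex (fun f : {ffun 'I_s -> bool} => [set i | f i])) /=; last first.
  exists (fun S : {set 'I_s} => [ffun i => i \in S]) => [f _|S _].
    by apply/ffunP => i; rewrite ffunE inE.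
  by apply/setP => i; rewrite inE ffunE.
apply: eq_bigr => f _; apply: eq_bigr => i _; by rewrite inE.
Qed.

Definition pw (p : R) (b : bool) : R := if b then p else 1 - p.
Definition pv (p : R) (b : bool) : R := if b then 1 - p else p.

Lemma mgf (s n : nat) (pa pt : R) (h : bool -> R) (j : 'I_n) :
  \sum_(A : 'M[bool]_(s, n)) \sum_(Rs : {set 'I_s})
     matrix_weight pa A * set_weight pt Rs * \prod_(i < s) h ((i \in Rs) && A i j)
  = \prod_(i < s) \sum_r pv pt r * \sum_a pw pa a * h (r && a).
Proof.
rewrite exchange_big /=.
under eq_bigr => Rs _.
  under eq_bigr => A _.
    have -> : matrix_weight pa A * set_weight pt Rs * \prod_(i < s) h ((i \in Rs) && A i j)
      = set_weight pt Rs * \prod_i \prod_j' (pw pa (A i j') *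
           (if j' == j then h ((i \in Rs) && A i j') else 1)).
      rewrite [matrix_weight _ _ * _]mulrC -mulrA; congr (_ * _).
      rewrite /matrix_weight -big_split /=; apply: eq_bigr => i _.
      rewrite big_split /= -big_mkcond big_pred1_eq; congr (_ * _).
    over.
  rewrite -mulr_sumr (sum_mx_prod _ _ (fun i j' b => pw pa b * (if j' == j then h ((i \in Rs) && b) else 1))).
  over.
rewrite /= -(sum_set_prod _ (fun i r => pv pt r * \sum_a pw pa a * h (r && a))).
apply: eq_bigr => Rs _; rewrite /set_weight -big_split /=.
apply: eq_bigr => i _.
rewrite /pv; congr (_ * _).
rewrite (bigD1 j) //= eqxx [X in _ * X]big1 ?mulr1 //.
move=> j' /negPf ->; by rewrite big_bool /pw /= mulr1 mulr1 addrC subrK.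
Qed.
End Comb.
Section Ineq.
Variable R : realType.

Lemma mvt_ge (f df : R -> R) (a b : R) : a <= b ->
  (forall x, a <= x <= b -> is_derive x 1 f (df x)) ->
  (forall x, a <= x <= b -> 0 <= df x) -> f a <= f b.
Proof.
move=> ab hd hp.
have [c cab e] : exists2 c, c \in `[a, b]%R & f b - f a = df c * (b - a).
  apply: MVT_segment => //.
    move=> x; rewrite in_itv /= => /andP[h1 h2]; apply: hd.
    by rewrite !ltW.
  apply: continuous_in_subspaceT => x; rewrite inE /= in_itv /= => xab.
  apply: differentiable_continuous; apply/derivable1_diffP.
  by have [] := hd x xab.
move: cab; rewrite in_itv /= => cab.
rewrite -subr_ge0 e; apply: mulr_ge0; first exact: hp.
by rewrite subr_ge0.
Qed.

Lemma ln_ge_pade (y : R) : 1 <= y -> 2 * (y - 1) / (y + 1) <= ln y.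
Proof.
move=> y1.
pose f := fun x : R => ln x + 4 * (x + 1)^-1.
pose df := fun x : R => x^-1 + 4 * (- (x + 1) ^- 2).
have : f 1 <= f y.
  apply: (@mvt_ge f df) => // x /andP[x1 xy].
    have x0 : 0 < x by lra.
    have h1 := is_derive1_ln x0.
    have h2 := is_deriveD (is_derive_id x (1:R)) (is_derive_cst (1:R) x 1).
    have hne : (id + cst (1:R)) x != 0.
      have -> : (id + cst (1:R)) x = x + 1 by []. rewrite gt_eqF //; lra.
    have h3 := is_deriveV hne h2.
    have h4 := is_deriveZ 4 h3.
    have h5 := is_deriveD h1 h4.
    apply: is_derive_eq h5 _.
    by rewrite /df addr0 scaler1.
  have x0 : 0 < x by lra.
  have -> : df x = (x - 1) ^+ 2 / (x * (x + 1) ^+ 2).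
    rewrite /df; field.
    by apply/andP; split; rewrite gt_eqF //; lra.
  by apply: divr_ge0; [exact: sqr_ge0| apply: mulr_ge0; [lra| exact: sqr_ge0]].
rewrite /f ln1 add0r.
have -> : 2 * (y - 1) / (y + 1) = 4 * (1 + 1)^-1 - 4 * (y + 1)^-1.
  field. by rewrite gt_eqF //; lra.
have -> : 4 * (1 + 1)^-1 = 2 :> R by field.
lra.
Qed.

Lemma ln_le_half (y : R) : 1 <= y -> ln y <= (y - y^-1) / 2.
Proof.
move=> y1.
pose f := fun x : R => 2^-1 * (x - x^-1) - ln x.
pose df := fun x : R => 2^-1 * (1 - (- x ^- 2 * 1)) - x^-1.
have : f 1 <= f y.
  apply: (@mvt_ge f df) => // x /andP[x1 xy].
    have x0 : 0 < x by lra.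
    have h1 := is_derive1_ln x0.
    have h2 := is_derive_id x (1:R).
    have hne : id x != 0 by rewrite gt_eqF.
    have h3 := is_deriveV hne h2.
    have h4 := is_deriveB h2 h3.
    have h5 := is_deriveZ (2^-1) h4.
    have h6 := is_deriveB h5 h1.
    apply: is_derive_eq h6 _.
    by rewrite /df.
  have x0 : 0 < x by lra.
  have -> : df x = (x - 1) ^+ 2 / (2 * x ^+ 2).
    rewrite /df; field.
    by rewrite gt_eqF.
  by apply: divr_ge0; [exact: sqr_ge0| apply: mulr_ge0; [lra| exact: sqr_ge0]].
rewrite /f ln1 invr1 subrr mulr0 subr0 => h.
have -> : (y - y^-1) / 2 = 2^-1 * (y - y^-1) by rewrite mulrC.
lra.
Qed.
End Ineq.
Section Ex.
Variable R : realType.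
Variables (s n : nat) (pa pt : R).
Hypotheses (pa0 : 0 <= pa) (pa1 : pa <= 1) (pt0 : 0 <= pt) (pt1 : pt <= 1).

Definition Ex (g : 'M[bool]_(s, n) -> {set 'I_s} -> R) : R :=
  \sum_(A : 'M[bool]_(s, n)) \sum_(Rs : {set 'I_s})
     matrix_weight pa A * set_weight pt Rs * g A Rs.

Lemma weight_ge0 (A : 'M[bool]_(s, n)) (Rs : {set 'I_s}) : 0 <= matrix_weight pa A * set_weight pt Rs.
Proof.
apply: mulr_ge0; apply: prodr_ge0 => i _.
  apply: prodr_ge0 => j _; have := pa0; have := pa1; case: (A i j) => /=; lra.
have := pt0; have := pt1; case: (i \in Rs) => /=; lra.
Qed.

Lemma Ex_le g g' : (forall A Rs, g A Rs <= g' A Rs) -> Ex g <= Ex g'.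
Proof.
move=> h; apply: ler_sum => A _; apply: ler_sum => Rs _.
by apply: ler_wpM2l; [exact: weight_ge0 | exact: h].
Qed.

Lemma Ex_sub g g' : Ex (fun A Rs => g A Rs - g' A Rs) = Ex g - Ex g'.
Proof.
rewrite /Ex -sumrB; apply: eq_bigr => A _; rewrite -sumrB.
by apply: eq_bigr => Rs _; rewrite mulrBr.
Qed.

Lemma Ex_sum (I : finType) (f : I -> 'M[bool]_(s, n) -> {set 'I_s} -> R) :
  Ex (fun A Rs => \sum_i f i A Rs) = \sum_i Ex (f i).
Proof.
rewrite /Ex [RHS]exchange_big /=; apply: eq_bigr => A _.
rewrite [RHS]exchange_big /=; apply: eq_bigr => Rs _.
by rewrite mulr_sumr.
Qed.

Lemma Ex_scale k g : Ex (fun A Rs => k * g A Rs) = k * Ex g.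
Proof.
rewrite /Ex mulr_sumr; apply: eq_bigr => A _; rewrite mulr_sumr.
by apply: eq_bigr => Rs _; rewrite mulrCA.
Qed.


Lemma Ex1 (j : 'I_n) : Ex (fun _ _ => 1) = 1.
Proof.
transitivity (\sum_(A : 'M[bool]_(s, n)) \sum_(Rs : {set 'I_s})
     matrix_weight pa A * set_weight pt Rs * \prod_(i < s) (fun _ => 1 : R) ((i \in Rs) && A i j)).
  rewrite /Ex; apply: eq_bigr => A _; apply: eq_bigr => Rs _.
  by rewrite big1_eq.
rewrite (@mgf R s n pa pt (fun _ => 1) j) big1 // => i _.
rewrite !big_bool /pv /pw /=; ring.
Qed.

Lemma Ex_prod (c : R) (j : 'I_n) : 0 < c ->
  Ex (fun A Rs => \prod_(i < s) (if (i \in Rs) && A i j then c else 1))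
  <= expR (s%:R * (pa * (1 - pt)) * (c - 1)).
Proof.
move=> c0.
rewrite /Ex.
rewrite (@mgf R s n pa pt (fun b => if b then c else 1) j).
have -> : \sum_r pv R pt r * \sum_a pw R pa a * (fun b : bool => if b then c else 1) (r && a)
   = 1 + pa * (1 - pt) * (c - 1).
  rewrite !big_bool /pv /pw /=; ring.
apply: (@le_trans _ _ (\prod_(i < s) expR (pa * (1 - pt) * (c - 1)))).
  apply: ler_prod => i _; apply/andP; split; last exact: expR_ge1Dx.
  have := pa0; have := pa1; have := pt0; have := pt1; move=> *.
  have h1 : 0 <= pa * (1 - pt) by apply: mulr_ge0; lra.
  have h2 : pa * (1 - pt) <= 1.
    have : pa * (1 - pt) <= 1 * 1 by apply: ler_pM; lra.
    by rewrite mulr1.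
  nra.
by rewrite prodr_const card_ord -expRM_natl mulrA.
Qed.

End Ex.

Definition Xc (R : realType) (s n : nat) (j : 'I_n) (A : 'M[bool]_(s, n))
  (Rs : {set 'I_s}) : R := \sum_(i in Rs) ((A i j)%:R : R).
Arguments Xc {R s n}.

Lemma prodY (R : realType) (s n : nat) (t : R) (j : 'I_n) (A : 'M[bool]_(s, n))
  (Rs : {set 'I_s}) :
  \prod_(i < s) (if (i \in Rs) && A i j then expR t else 1) = expR (t * Xc j A Rs).
Proof.
rewrite /Xc mulr_sumr expR_sum [RHS]big_mkcond /=; apply: eq_bigr => i _.
by case: (i \in Rs); case: (A i j); rewrite /= ?mulr1 ?mulr0 ?expR0.
Qed.

Lemma res_of_good (R : realType) (s n : nat) (delta lo : R) (A : 'M[bool]_(s, n))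
  (Rs : {set 'I_s}) : 0 < lo ->
  (forall j, lo <= Xc j A Rs <= (1 + delta) * lo) -> resilient delta A Rs.
Proof.
move=> lo0 hg.
exists (const_mx lo^-1); split.
  by move=> k; rewrite mxE invr_ge0 ltW.
move=> j; rewrite !mxE.
have -> : \sum_j0 const_mx (lo^-1) 0 j0 * sub_rows R A Rs j0 j = lo^-1 * Xc j A Rs.
  rewrite /Xc big_enum_val mulr_sumr /=; move=> *; apply: eq_bigr => k _.
  by rewrite !mxE.
have := hg j => /andP[h1 h2].
apply/andP; split.
  by rewrite mulrC ler_pdivlMr // mul1r.
by rewrite mulrC ler_pdivrMr.
Qed.

Lemma Ex_add (R : realType) (s n : nat) (pa pt : R) g g' :
  Ex R s n pa pt (fun A Rs => g A Rs + g' A Rs) = Ex R s n pa pt g + Ex R s n pa pt g'.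
Proof.
rewrite /Ex -big_split; apply: eq_bigr => A _; rewrite -big_split.
by apply: eq_bigr => Rs _; rewrite mulrDr.
Qed.

Lemma ind_le (R : realType) (u v t : R) : 0 <= t ->
  (if v < u then 1 else 0) <= expR (t * (u - v)).
Proof.
move=> t0; case: ifP => h; last exact: expR_ge0.
apply: le_trans (expR_ge1Dx _).
rewrite lerDl; apply: mulr_ge0 => //; rewrite subr_ge0 ltW //.
Qed.

Theorem theorem5 (R : realType) (n s : nat) (delta pt : R) :
  (1 <= n)%N -> (1 <= s)%N -> 0 < delta -> 0 <= pt -> pt < 1 ->
  ell_param n delta pt <= s%:R ->
  1 - 1 / n%:R <= prob_resilient s n (ell_param n delta pt / s%:R) pt delta.
Proof.
move=> hn hs hd pt0 pt1 hell.
pose L : R := ln (Num.sqrt 2 * n%:R).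
pose K := 6 * (2 + delta) ^+ 2 / delta ^+ 2.
have ellE : ell_param n delta pt = K * (L / (1 - pt)) by [].
set ell := ell_param n delta pt in hell *.
set pa := ell / s%:R.
have s0 : 0 < s%:R :> R by rewrite ltr0n.
have n0 : 0 < n%:R :> R by rewrite ltr0n.
have n1 : 1 <= n%:R :> R by rewrite ler1n.
have sq2 : 1 < Num.sqrt 2 :> R.
  have h1 := @sqrtr_ge0 R 2.
  have h2 : Num.sqrt 2 ^+ 2 = 2 :> R by rewrite sqr_sqrtr //; lra.
  nra.
have L0 : 0 < L.
  apply: ln_gt0; nra.
have K0 : 0 < K by rewrite /K; apply: divr_gt0; [apply: mulr_gt0; [lra | apply: exprn_gt0; lra] | apply: exprn_gt0].
have ell0 : 0 <= ell by rewrite /ell ellE; apply: mulr_ge0; [lra | apply: divr_ge0; lra].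
have pa0 : 0 <= pa by apply: divr_ge0 => //; lra.
have pa1 : pa <= 1 by rewrite /pa ler_pdivrMr // mul1r.
have pt1' : pt <= 1 by lra.
set mu := K * L.
have mu0 : 0 < mu by apply: mulr_gt0.
have muE : s%:R * (pa * (1 - pt)) = mu.
  rewrite /pa /ell ellE /mu; field; apply/andP; split; rewrite gt_eqF //; lra.
set eps := delta / (2 + delta).
have eps0 : 0 < eps by apply: divr_gt0; lra.
have eps1 : eps < 1 by rewrite /eps ltr_pdivrMr; lra.
set lo := (1 - eps) * mu.
have lo0 : 0 < lo by apply: mulr_gt0 => //; lra.
have hiE : (1 + delta) * lo = (1 + eps) * mu.
  rewrite /lo /eps; field; rewrite gt_eqF //; lra.
have LE : mu * eps ^+ 2 / 3 = 2 * L.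
  rewrite /mu /K /eps; field; apply/andP; split; rewrite gt_eqF //; lra.
have expL : expR (- (2 * L)) = (2 * n%:R ^+ 2)^-1.
  rewrite expRN expRM_natl /L lnK; last first.
    by rewrite posrE; apply: mulr_gt0 => //; lra.
  by rewrite exprMn sqr_sqrtr //; lra.
have j0 : 'I_n := Ordinal hn.
pose Ihi := fun (j : 'I_n) (A : 'M[bool]_(s, n)) (Rs : {set 'I_s}) =>
  (if (1 + delta) * lo < Xc j A Rs then 1 else 0 : R).
pose Ilo := fun (j : 'I_n) (A : 'M[bool]_(s, n)) (Rs : {set 'I_s}) =>
  (if Xc j A Rs < lo then 1 else 0 : R).
have Ige0 : forall j A Rs, 0 <= Ihi j A Rs + Ilo j A Rs.
  by move=> j A Rs; rewrite /Ihi /Ilo; case: ifP; case: ifP; lra.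
have -> : prob_resilient s n pa pt delta =
    Ex R s n pa pt (fun A Rs => if `[< resilient delta A Rs >] then 1 else 0).
  rewrite /prob_resilient /Ex; apply: eq_bigr => A _; apply: eq_bigr => Rs _.
  by case: ifP; rewrite ?mulr1 ?mulr0.
apply: (@le_trans _ _ (Ex R s n pa pt
   (fun A Rs => 1 - \sum_j (Ihi j A Rs + Ilo j A Rs)))); last first.
  apply: Ex_le => // A Rs.
  have hS : 0 <= \sum_j (Ihi j A Rs + Ilo j A Rs) by apply: sumr_ge0 => j _.
  case: (boolP [exists j, ((1 + delta) * lo < Xc j A Rs) || (Xc j A Rs < lo)]).
    move=> /existsP[j hj].
    have hj1 : 1 <= Ihi j A Rs + Ilo j A Rs.
      rewrite /Ihi /Ilo; case/orP: hj => ->; case: ifP => _; lra.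
    have hr : 0 <= \sum_(i | i != j) (Ihi i A Rs + Ilo i A Rs).
      by apply: sumr_ge0 => i _.
    rewrite (bigD1 j) //=.
    case: ifP => _; lra.
  rewrite negb_exists => /forallP hall.
  have hres : resilient delta A Rs.
    apply: (@res_of_good R s n delta lo A Rs lo0) => j; have := hall j.
    by rewrite negb_or -!leNgt => /andP[h1 h2]; rewrite h2 h1.
  rewrite (asboolT hres); lra.
rewrite Ex_sub (Ex1 _ _ _ _ _ j0) Ex_sum.
have bnd : forall j, Ex R s n pa pt (fun A Rs => Ihi j A Rs + Ilo j A Rs)
    <= 2 * (2 * n%:R ^+ 2)^-1.
  move=> j; rewrite Ex_add -expL.
  have eps0' : 0 <= eps by lra.
  have hup : Ex R s n pa pt (Ihi j) <= expR (- (2 * L)).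
    pose tu := ln (1 + eps).
    have tu0 : 0 <= tu by apply: ln_ge0; lra.
    have etu : expR tu = 1 + eps by rewrite /tu lnK // posrE; lra.
    have hp := @ln_ge_pade R (1 + eps).
    have htu : 2 * eps <= tu * (2 + eps).
      have h := hp ltac:(lra).
      have e2 : 2 * (1 + eps - 1) / (1 + eps + 1) = 2 * eps / (2 + eps).
        by congr (_ / _); ring.
      rewrite e2 ler_pdivrMr in h; last lra.
      by [].
    have hu : Ex R s n pa pt (Ihi j) <= expR (- (tu * ((1 + eps) * mu))) *
        Ex R s n pa pt (fun A Rs => \prod_(i < s) (if (i \in Rs) && A i j then expR tu else 1)).
      rewrite -Ex_scale; apply: Ex_le => // A Rs.
      rewrite prodY -expRD /Ihi hiE.
      apply: le_trans (@ind_le R _ _ _ tu0) _.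
      by rewrite le_eqVlt; apply/orP; left; apply/eqP; congr expR; ring.
    apply: le_trans hu _.
    apply: le_trans (ler_wpM2l (expR_ge0 _) (Ex_prod _ _ _ _ _ pa0 pa1 pt0 pt1' _ j (expR_gt0 tu))) _.
    rewrite muE etu -expRD ler_expR -LE.
    have h3 : eps + eps ^+ 2 / 3 <= tu * (1 + eps).
      have : (eps + eps ^+ 2 / 3) * (2 + eps) <= tu * (1 + eps) * (2 + eps).
        have : tu * (1 + eps) * (2 + eps) = (tu * (2 + eps)) * (1 + eps) by ring.
        move=> ->.
        apply: le_trans (_ : 2 * eps * (1 + eps) <= _); last first.
          by apply: ler_wpM2r => //; lra.
        have -> : (eps + eps ^+ 2 / 3) * (2 + eps) = 2 * eps * (1 + eps) - eps ^+ 2 * (1 - eps) / 3.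
          by field.
        rewrite lerBlDr lerDl; apply: divr_ge0; last lra.
        apply: mulr_ge0; [exact: sqr_ge0 | lra].
      by rewrite ler_pM2r //; lra.
    have : mu * (eps + eps ^+ 2 / 3) <= mu * (tu * (1 + eps)) by rewrite ler_pM2l.
    have -> : mu * eps ^+ 2 / 3 = mu * (eps ^+ 2 / 3) by rewrite mulrA.
    lra.
  have hlo : Ex R s n pa pt (Ilo j) <= expR (- (2 * L)).
    have ome0 : 0 < 1 - eps by lra.
    pose tl := ln ((1 - eps)^-1).
    have x1 : 1 <= (1 - eps)^-1 by rewrite invf_ge1 //; lra.
    have tl0 : 0 <= tl by apply: ln_ge0.
    have etl : expR (- tl) = 1 - eps.
      by rewrite expRN /tl lnK ?invrK // posrE invr_gt0.
    have hh := @ln_le_half R _ x1.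
    rewrite invrK -/tl in hh.
    have htl : tl * (1 - eps) <= eps - eps ^+ 2 / 2.
      have : tl * (1 - eps) <= ((1 - eps)^-1 - (1 - eps)) / 2 * (1 - eps).
        by apply: ler_wpM2r => //; lra.
      have -> : ((1 - eps)^-1 - (1 - eps)) / 2 * (1 - eps) = eps - eps ^+ 2 / 2.
        by field; rewrite gt_eqF.
      by [].
    have hl : Ex R s n pa pt (Ilo j) <= expR (tl * lo) *
        Ex R s n pa pt (fun A Rs => \prod_(i < s) (if (i \in Rs) && A i j then expR (- tl) else 1)).
      rewrite -Ex_scale; apply: Ex_le => // A Rs.
      rewrite prodY -expRD /Ilo.
      apply: le_trans (@ind_le R _ _ _ tl0) _.
      by rewrite le_eqVlt; apply/orP; left; apply/eqP; congr expR; ring.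
    apply: le_trans hl _.
    apply: le_trans (ler_wpM2l (expR_ge0 _) (Ex_prod _ _ _ _ _ pa0 pa1 pt0 pt1' _ j (expR_gt0 (- tl)))) _.
    rewrite muE etl -expRD ler_expR -LE.
    have : tl * lo <= mu * (eps - eps ^+ 2 / 2).
      rewrite /lo; have -> : tl * ((1 - eps) * mu) = mu * (tl * (1 - eps)) by ring.
      by rewrite ler_pM2l.
    have e3 : mu * eps ^+ 2 / 3 = mu * (eps ^+ 2 / 3) by rewrite mulrA.
    have e4 : 0 <= mu * eps ^+ 2 by apply: mulr_ge0; [lra | exact: sqr_ge0].
    rewrite e3.
    have -> : mu * (eps - eps ^+ 2 / 2) = mu * eps - mu * eps ^+ 2 / 2 by ring.
    have -> : mu * (eps ^+ 2 / 3) = mu * eps ^+ 2 / 3 by ring.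
    lra.
  lra.
have hsum : \sum_(j < n) Ex R s n pa pt (fun A Rs => Ihi j A Rs + Ilo j A Rs)
    <= \sum_(j < n) (2 * (2 * n%:R ^+ 2)^-1 : R).
  by apply: ler_sum => j _; exact: bnd.
rewrite sumr_const card_ord in hsum.
have e : (2 * (2 * n%:R ^+ 2)^-1) *+ n = 1 / n%:R :> R.
  by rewrite -mulr_natr; field; rewrite gt_eqF.
rewrite e in hsum.
lra.
Qed.
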